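(* Let $R$ be a reduced ring and let $S=\left\{\begin{pmatrix} a&b\\0&a\end{pmatrix} : a,b\in R\right\}$. Then $S$ is almost Armendariz, and the trivial extension $T(S,S)$ is also almost Armendariz.
   Context: All rings are associative with identity. A ring is reduced if it has no nonzero nilpotent elements. For a ring $R$ and an $R$-bimodule $M$, the trivial extension $T(R,M)$ is $R\times M$ with componentwise addition and multiplication $(r_1,m_1)(r_2,m_2)=(r_1r_2, r_1m_2+m_1r_2)$. For a ring $R$, $P(R)$ denotes the prime radical of $R$ (the intersection of all prime ideals of $R$, equivalently the set of strongly nilpotent elements of $R$). A ring $R$ is called almost Armendariz if whenever $f(x)=\sum_{i=0}^m a_ix^i$ and $g(x)=\sum_{j=0}^n b_jx^j\in R[x]$ satisfy $f(x)g(x)=0$, then $a_ib_j\in P(R)$ for all $0\le i\le m$, $0\le j\le n$. *)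

(* Defs.v *)
From HB Require Import structures.
From mathcomp Require Import all_boot all_order all_algebra.
Set Implicit Arguments. Unset Strict Implicit. Unset Printing Implicit Defensive.
Import Order.TTheory GRing.Theory Num.Theory.
Local Open Scope ring_scope.

Definition reduced (R : nzRingType) : Prop :=
  forall (x : R) (n : nat), x ^+ n = 0 -> x = 0.

Definition is_ideal (R : nzRingType) (I : R -> Prop) : Prop :=
  [/\ I 0, (forall x y, I x -> I y -> I (x - y)) &
      (forall r x, I x -> I (r * x) /\ I (x * r))].

Definition is_prime_ideal (R : nzRingType) (P : R -> Prop) : Prop :=
  [/\ is_ideal P, ~ P 1 &
      (forall a b, (forall r, P (a * r * b)) -> P a \/ P b)].

Definition prime_radical (R : nzRingType) (x : R) : Prop :=
  forall P : R -> Prop, is_prime_ideal P -> P x.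

Definition almost_armendariz (R : nzRingType) : Prop :=
  forall f g : {poly R}, f * g = 0 ->
    forall i j, (i < size f)%N -> (j < size g)%N ->
      prime_radical (f`_i * g`_j).

Section UpperEq.
Variable R : nzRingType.

Definition upper_eq_pred : {pred 'M[R]_2} :=
  fun A => (A 1 0 == 0) && (A 0 0 == A 1 1).

Lemma upper_eq_subring_closed : subring_closed upper_eq_pred.
Proof.
split.
- by rewrite unfold_in /upper_eq_pred !mxE /= !eqxx.
- move=> A B; rewrite !unfold_in /upper_eq_pred => /andP[/eqP a10 /eqP a00]
    /andP[/eqP b10 /eqP b00].
  by rewrite !mxE a10 b10 a00 b00 subr0 !eqxx.
- move=> A B; rewrite !unfold_in /upper_eq_pred => /andP[/eqP a10 /eqP a00]
    /andP[/eqP b10 /eqP b00].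
  rewrite !mxE !big_ord_recr !big_ord0 /= !add0r.
  have e1 : forall H, widen_ord H (ord_max : 'I_1.+1) = (1 : 'I_2) by move=> H; apply/val_inj.
  have e0 : forall H, widen_ord H (ord0 : 'I_1.+1) = (0 : 'I_2) by move=> H; apply/val_inj.
  have e1' : (ord_max : 'I_2) = 1 by apply/val_inj.
  have e2 : forall H, widen_ord H (ord_max : 'I_0.+1) = (0 : 'I_2) by move=> H; apply/val_inj.
  rewrite ?e1 ?e0 ?e2 ?e1'.
  by rewrite a10 b10 a00 b00 !mul0r !mulr0 ?addr0 ?add0r !eqxx.
Qed.

HB.instance Definition _ := GRing.isSubringClosed.Build _ upper_eq_pred
  upper_eq_subring_closed.

Definition upper_eq_mx := {A : 'M[R]_2 | A \in upper_eq_pred}.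
HB.instance Definition _ := [isSub for (@sval _ _ : upper_eq_mx -> 'M[R]_2)].
HB.instance Definition _ := [Choice of upper_eq_mx by <:].
HB.instance Definition _ := [SubChoice_isSubNzRing of upper_eq_mx by <:].
End UpperEq.

Definition triv_ext (A : nzRingType) : Type := (A * A)%type.

Section TrivExt.
Variable A : nzRingType.
Local Notation T := (triv_ext A).

HB.instance Definition _ := GRing.Zmodule.on T.

Definition te_one : T := (1, 0).
Definition te_mul (x y : T) : T := (x.1 * y.1, x.1 * y.2 + x.2 * y.1).

Lemma te_mulA : associative te_mul.
Proof.
move=> [a b] [c d] [e f]; rewrite /te_mul /=; congr pair; first by rewrite mulrA.
by rewrite mulrDr mulrDl !mulrA addrA.
Qed.
Lemma te_mul1r : left_id te_one te_mul.
Proof. by move=> [a b]; rewrite /te_mul /te_one /= !mul1r mul0r addr0. Qed.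
Lemma te_mulr1 : right_id te_one te_mul.
Proof. by move=> [a b]; rewrite /te_mul /te_one /= !mulr1 mulr0 add0r. Qed.
Lemma te_mulDl : left_distributive te_mul +%R.
Proof.
move=> [a b] [c d] [e f]; rewrite /te_mul /=; congr pair; first by rewrite mulrDl.
by rewrite !mulrDl addrACA.
Qed.
Lemma te_mulDr : right_distributive te_mul +%R.
Proof.
move=> [a b] [c d] [e f]; rewrite /te_mul /=; congr pair; first by rewrite mulrDr.
by rewrite !mulrDr addrACA.
Qed.
Lemma te_one_neq0 : te_one != 0.
Proof. by apply/negP => /eqP[] /eqP; rewrite oner_eq0. Qed.

HB.instance Definition _ := GRing.Zmodule_isNzRing.Build T
  te_mulA te_mul1r te_mulr1 te_mulDl te_mulDr te_one_neq0.
End TrivExt.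

(* Main.v *)
Require Import Defs.
From HB Require Import structures.
From mathcomp Require Import all_boot all_order all_algebra.
From mathcomp Require Import zify.
Import GRing.Theory.
Local Open Scope ring_scope.

Section Red.
Variable R : nzRingType.
Hypothesis Hr : reduced R.

Lemma red_comm (x y : R) : x * y = 0 -> y * x = 0.
Proof.
move=> H; apply: (Hr _ 2); rewrite expr2 mulrA -(mulrA y) H mulr0 mul0r //.
Qed.

Lemma arm_seq (a b : nat -> R) :
  (forall k, \sum_(i < k.+1) a i * b (k - i)%N = 0) ->
  forall k i, (i <= k)%N -> a i * b (k - i)%N = 0.
Proof.
move=> Hs; elim/ltn_ind => k IHk.
elim/ltn_ind => t IHt tk.
have H0 : (\sum_(i < k.+1) a i * b (k - i)%N) * a t = 0 by rewrite Hs mul0r.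
rewrite mulr_suml (bigD1 (Ordinal (n:=k.+1) (m:=t) tk)) //= big1 ?addr0 in H0.
  apply: (Hr _ 2); by rewrite expr2 mulrA H0 mul0r.
move=> [i ik] /= ne.
have : i != t by apply: contra ne => /eqP e; apply/eqP/val_inj => /=.
rewrite neq_ltn => /orP[it|ti].
  by rewrite (IHt i it) ?mul0r //; lia.
have Hlt : (t + (k - i) < k)%N by lia.
have := IHk (t + (k - i))%N Hlt t (leq_addr _ _); rewrite addKn => H.
by rewrite -mulrA (red_comm _ _ H) mulr0.
Qed.
End Red.

Lemma rad_sq (A : nzRingType) (x : A) :
  (forall r, prime_radical (x * r * x)) -> prime_radical x.
Proof. move=> H P HP; case: (HP) => _ _ Hp; by case: (Hp x x (fun r => H r P HP)). Qed.

Lemma rad0 (A : nzRingType) : prime_radical (0 : A).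
Proof. by move=> P [[]]. Qed.

Lemma arm_of_hom (A R : nzRingType) (Hr : reduced R) (phi : A -> R)
  (phi0 : phi 0 = 0) (phiD : forall x y, phi (x + y) = phi x + phi y)
  (phiM : forall x y, phi (x * y) = phi x * phi y)
  (Hker : forall x, phi x = 0 -> prime_radical x) : almost_armendariz A.
Proof.
move=> f g fg i j _ _; apply: Hker; rewrite phiM.
have := @arm_seq R Hr (fun i => phi f`_i) (fun j => phi g`_j) _ (i + j) i (leq_addr _ _).
rewrite addKn; apply => k.
under eq_bigr do rewrite -phiM.
by rewrite -(big_morph phi phiD phi0) -coefM fg coef0 phi0.
Qed.

Lemma ord2 (i : 'I_2) : i = 0 \/ i = 1.
Proof. case: i => [[|[|n]] H]; [left|right|] => //; apply: val_inj => //. Qed.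

Lemma mul2 (R : nzRingType) (M N : 'M[R]_2) i j :
  (M * N) i j = M i 0 * N 0 j + M i 1 * N 1 j.
Proof.
rewrite !mxE !big_ord_recr big_ord0 /= add0r.
have e1 : forall H, widen_ord H (ord_max : 'I_1.+1) = (1 : 'I_2) by move=> H; apply/val_inj.
  have e0 : forall H, widen_ord H (ord0 : 'I_1.+1) = (0 : 'I_2) by move=> H; apply/val_inj.
  have e1' : (ord_max : 'I_2) = 1 by apply/val_inj.
  have e2 : forall H, widen_ord H (ord_max : 'I_0.+1) = (0 : 'I_2) by move=> H; apply/val_inj.
  by rewrite ?e1 ?e0 ?e2 ?e1'.
Qed.

Section S.
Variable R : nzRingType.
Hypothesis Hr : reduced R.
Local Notation S := (upper_eq_mx R).

Lemma Sent (x : S) : val x 1 0 = 0 /\ val x 1 1 = val x 0 0.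
Proof.
by have := valP x; rewrite unfold_in /upper_eq_pred => /andP[/eqP h1 /eqP h2].
Qed.

Definition phiS (x : S) : R := val x 0 0.

Lemma phiS0 : phiS 0 = 0. Proof. by rewrite /phiS mxE. Qed.
Lemma phiSD x y : phiS (x + y) = phiS x + phiS y. Proof. by rewrite /phiS /= mxE. Qed.
Lemma phiSM x y : phiS (x * y) = phiS x * phiS y.
Proof. by rewrite /phiS /= mul2 (proj1 (Sent y)) mulr0 addr0. Qed.

Lemma Sker (x r : S) : phiS x = 0 -> x * r * x = 0.
Proof.
rewrite /phiS => h; apply: val_inj; apply/matrixP => i j.
have [x10 x11] := Sent x; have [r10 r11] := Sent r.
rewrite /= !mul2 mxE.
case: (ord2 i) => ->; case: (ord2 j) => ->;
rewrite ?x10 ?x11 ?h ?r10 ?r11 ?h; rewrite ?mul0r ?mulr0 ?addr0 ?add0r.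
all: by rewrite ?mul0r ?mulr0 ?addr0 ?add0r.
Qed.

Lemma almS : almost_armendariz S.
Proof.
apply: (@arm_of_hom _ _ Hr _ phiS0 phiSD phiSM) => x hx.
apply: rad_sq => r; rewrite Sker //; exact: rad0.
Qed.
End S.

Section TT.
Variable R : nzRingType.
Hypothesis Hr : reduced R.
Local Notation T := (triv_ext (upper_eq_mx R)).

Definition phiT (p : T) : R := @phiS R p.1.

Lemma Tsq (y r : T) : y.1 = 0 -> y * r * y = 0.
Proof.
case: y => y1 y2 /= ->; case: r => r1 r2.
rewrite /GRing.mul /= /te_mul /=.
by rewrite !(mul0r, mulr0, addr0, add0r).
Qed.

Lemma almT : almost_armendariz T.
Proof.
apply: (@arm_of_hom _ _ Hr phiT (phiS0 R) (fun x y => @phiSD R x.1 y.1)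
   (fun x y => @phiSM R x.1 y.1)) => p hp.
apply: rad_sq => r; apply: rad_sq => r'.
rewrite Tsq; first exact: rad0.
exact: (@Sker R p.1 r.1 hp).
Qed.
End TT.

Theorem corollary2p3 (R : nzRingType) :
  reduced R ->
  almost_armendariz (upper_eq_mx R) /\
  almost_armendariz (triv_ext (upper_eq_mx R)).
Proof. by move=> Hr; split; [exact: almS | exact: almT]. Qed.
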